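(* Let $H$ be a Hermitian operator on a $d$-dimensional Hilbert space with spectral decomposition $H=\sum_{i=1}^M\lambda_i\Pi_i$, where $M\ge 2$, $\lambda_M>\cdots>\lambda_1$ are the distinct eigenvalues and $\Pi_i$ the spectral projections. Let $\Delta=\lambda_2-\lambda_1$, $d_G=\operatorname{Tr}[\Pi_1]$, and $\varepsilon>0$. If $$\beta=\frac{1}{\Delta}\ln\!\left[\left(\frac{1}{e^\varepsilon-1}\right)\left(\frac{d-d_G}{d_G}\right)\right]$$ and $\beta\ge 0$, then $$D\!\left(\frac{\Pi_1}{\operatorname{Tr}[\Pi_1]}\middle\|\frac{e^{-\beta H}}{\operatorname{Tr}[e^{-\beta H}]}\right)\le\varepsilon,$$ and the same inequality holds with $D$ replaced by $D_\alpha$, $\widetilde{D}_\alpha$, or $\widehat{D}_\alpha$ for every $\alpha\in(0,1)\cup(1,\infty)$.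
   Context: For states $\rho,\sigma$: $D(\rho\|\sigma)=\operatorname{Tr}[\rho(\ln\rho-\ln\sigma)]$ (quantum relative entropy); $D_\alpha(\rho\|\sigma)=\frac{1}{\alpha-1}\ln\operatorname{Tr}[\rho^\alpha\sigma^{1-\alpha}]$ (Petz–Rényi); $\widetilde{D}_\alpha(\rho\|\sigma)=\frac{1}{\alpha-1}\ln\operatorname{Tr}\!\left[\left(\sigma^{\frac{1-\alpha}{2\alpha}}\rho\,\sigma^{\frac{1-\alpha}{2\alpha}}\right)^\alpha\right]$ (sandwiched Rényi); $\widehat{D}_\alpha(\rho\|\sigma)=\frac{1}{\alpha-1}\ln\operatorname{Tr}\!\left[\sigma\left(\sigma^{-1/2}\rho\,\sigma^{-1/2}\right)^\alpha\right]$ (geometric Rényi). *)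

(* Defs.v *)
From HB Require Import structures.
From mathcomp Require Import all_boot all_order all_algebra.
From mathcomp Require Import sesquilinear spectral.
From mathcomp Require Import complex.
From mathcomp Require Import reals sequences.
From mathcomp.analysis Require Import exp.

Set Implicit Arguments.
Unset Strict Implicit.
Unset Printing Implicit Defensive.

Import Order.TTheory GRing.Theory Num.Theory.
Local Open Scope ring_scope.
Local Open Scope sesquilinear_scope.

Section QuantumDefs.
Variable R : realType.
Local Notation C := R[i].

Definition cr (x : R) : C := Complex x 0.

(* Functional calculus for a Hermitian (more generally normal) matrix A:
   if A = U^* diag(a) U with U unitary (spectral theorem, spectral.v),
   f(A) := U^* diag(f(Re a_k)) U. *)
Definition fun_mx n (f : R -> R) (A : 'M[C]_n) : 'M[C]_n :=
  let U := spectralmx A in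
  (U ^t*) *m diag_mx (map_mx (fun z => cr (f (complex.Re z))) (spectral_diag A)) *m U.

(* matrix exponential, logarithm (with the usual support convention ln 0 := 0,
   as for mathcomp-analysis' ln), and real powers (x `^ a, with 0 `^ a = 0
   for a <> 0, i.e. powers taken on the support) *)
Definition mx_exp n (A : 'M[C]_n) := fun_mx expR A.
Definition mx_ln n (A : 'M[C]_n) := fun_mx (@ln R) A.
Definition mx_pow n (A : 'M[C]_n) (a : R) := fun_mx (fun x => powR x a) A.

Definition rtr n (A : 'M[C]_n) : R := complex.Re (\tr A).

Definition qrel_ent n (rho sigma : 'M[C]_n) : R :=
  rtr (rho *m (mx_ln rho - mx_ln sigma)).

Definition petz_renyi n (a : R) (rho sigma : 'M[C]_n) : R :=
  (a - 1)^-1 * ln (rtr (mx_pow rho a *m mx_pow sigma (1 - a))).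

Definition sandwiched_renyi n (a : R) (rho sigma : 'M[C]_n) : R :=
  let s := mx_pow sigma ((1 - a) / (2 * a)) in
  (a - 1)^-1 * ln (rtr (mx_pow (s *m rho *m s) a)).

Definition geometric_renyi n (a : R) (rho sigma : 'M[C]_n) : R :=
  let s := mx_pow sigma (- (1 / 2)) in
  (a - 1)^-1 * ln (rtr (sigma *m mx_pow (s *m rho *m s) a)).

End QuantumDefs.

(* Main.v *)
Require Import Defs.
From HB Require Import structures.
From mathcomp Require Import all_boot all_order all_algebra.
From mathcomp Require Import sesquilinear spectral.
From mathcomp Require Import complex.
From mathcomp Require Import reals sequences.
From mathcomp.analysis Require Import exp.
From mathcomp Require Import ring lra.
Import Order.TTheory GRing.Theory Num.Theory.
Local Open Scope ring_scope.
Local Open Scope sesquilinear_scope.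

Section CR.
Variable R : realType.
Local Notation C := R[i].

Lemma crD (a b : R) : cr (a + b) = cr a + cr b.
Proof. by rewrite /cr; congr Complex; rewrite addr0. Qed.
Lemma crM (a b : R) : cr (a * b) = cr a * cr b.
Proof. by rewrite /cr /=; congr Complex; rewrite ?mul0r ?mulr0 ?subr0 ?addr0. Qed.
Lemma crN (a : R) : cr (- a) = - cr a.
Proof. by rewrite /cr /=; congr Complex; rewrite oppr0. Qed.
Lemma crB (a b : R) : cr (a - b) = cr a - cr b.
Proof. by rewrite crD crN. Qed.
Lemma cr0 : cr 0 = 0 :> C. Proof. by []. Qed.
Lemma cr1 : cr 1 = 1 :> C. Proof. by []. Qed.
Lemma crV (a : R) : cr (a^-1) = (cr a)^-1.
Proof.
have -> : cr a = (a%:C)%C by [].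
have -> : cr a^-1 = ((a^-1)%:C)%C by [].
by rewrite fmorphV.
Qed.
Lemma Re_cr (a : R) : complex.Re (cr a) = a. Proof. by []. Qed.
Lemma conj_cr (a : R) : Num.conj (cr a) = cr a.
Proof. by rewrite /cr; change (Complex a (- 0) = Complex a 0); rewrite oppr0. Qed.
Lemma ReD (a b : C) : complex.Re (a + b) = complex.Re a + complex.Re b.
Proof. by case: a; case: b. Qed.
Lemma Re_crM (a : R) (z : C) : complex.Re (cr a * z) = a * complex.Re z.
Proof. by case: z => u v; rewrite /cr /= mul0r subr0. Qed.
Lemma Re_nat n : complex.Re (n%:R : C) = n%:R.
Proof.
elim: n => [//|n IH]; by rewrite -addn1 !natrD ReD IH.
Qed.
Lemma Re_sum I (r : seq I) (P : pred I) (F : I -> C) :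
  complex.Re (\sum_(i <- r | P i) F i) = \sum_(i <- r | P i) complex.Re (F i).
Proof. by apply: (big_morph _ ReD). Qed.
Lemma Re_mulJ (z : C) : complex.Re (z * Num.conj z) = complex.Re z ^+ 2 + complex.Im z ^+ 2.
Proof.
case: z => u v; change (u * u - v * - v = u ^+ 2 + v ^+ 2).
by rewrite mulrN opprK.
Qed.
Lemma Re2_gt0 (z : C) : z != 0 -> 0 < complex.Re z ^+ 2 + complex.Im z ^+ 2.
Proof.
move=> nz; rewrite lt_neqAle addr_ge0 ?sqr_ge0 // andbT eq_sym.
rewrite paddr_eq0 ?sqr_ge0 // !sqrf_eq0; apply: contra nz.
by case: z => u v /= /andP[/eqP -> /eqP ->].
Qed.
Lemma herm_tr n (M : 'M[C]_n) : M ^t* = M -> \tr M = cr (rtr M).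
Proof.
move=> hM.
have e : \tr M = Num.conj (\tr M).
  by rewrite -{1}hM trace_map_mx mxtrace_tr.
rewrite /rtr; move: e; case: (\tr M) => u v.
change (Complex u v = Complex u (- v) -> Complex u v = Complex u 0).
case=> hv; congr Complex.
have : v + v = 0 by rewrite {1}hv addNr.
by rewrite -mulr2n -mulr_natr => /eqP; rewrite mulf_eq0 pnatr_eq0 orbF => /eqP.
Qed.
End CR.

Section Comb.
Variable R : realType.
Local Notation C := R[i].
Variables (n k : nat) (P : 'I_k -> 'M[C]_n).
Hypothesis Pidem : forall i, P i *m P i = P i.
Hypothesis Pherm : forall i, (P i) ^t* = P i.
Hypothesis Porth : forall i j, i != j -> P i *m P j = 0.
Hypothesis Psum : \sum_(i < k) P i = 1%:M.

Definition comb (x : 'I_k -> R) : 'M[C]_n := \sum_(j < k) cr (x j) *: P j.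

Lemma comb_mulP x j : comb x *m P j = cr (x j) *: P j.
Proof.
rewrite /comb mulmx_suml (bigD1 j) //= big1 ?addr0; first by rewrite -scalemxAl Pidem.
by move=> i hi; rewrite -scalemxAl Porth ?scaler0.
Qed.

Lemma comb_mul x y : comb x *m comb y = comb (fun j => x j * y j).
Proof.
rewrite {2}/comb mulmx_sumr /comb; apply: eq_bigr => j _.
by rewrite -scalemxAr -/(comb x) comb_mulP scalerA crM mulrC.
Qed.

Lemma combB x y : comb x - comb y = comb (fun j => x j - y j).
Proof.
by rewrite /comb -sumrB; apply: eq_bigr => j _; rewrite crB scalerBl.
Qed.

Lemma combZ a x : cr a *: comb x = comb (fun j => a * x j).
Proof.
by rewrite /comb scaler_sumr; apply: eq_bigr => j _; rewrite scalerA crM.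
Qed.

Lemma comb_delta i a : comb (fun j => if j == i then a else 0) = cr a *: P i.
Proof.
rewrite /comb (bigD1 i) //= eqxx big1 ?addr0 // => j /negbTE ->.
by rewrite cr0 scale0r.
Qed.

Lemma comb1 : comb (fun _ => 1) = 1%:M.
Proof. by rewrite -Psum /comb; apply: eq_bigr => j _; rewrite cr1 scale1r. Qed.

Lemma comb_adj x : (comb x) ^t* = comb x.
Proof.
apply/matrixP => a b; rewrite !mxE !summxE rmorph_sum; apply: eq_bigr => j _.
rewrite !mxE rmorphM; congr (_ * _); first exact: conj_cr.
by rewrite -{2}(Pherm j) !mxE.
Qed.

Lemma rtr_comb x : rtr (comb x) = \sum_(j < k) x j * rtr (P j).
Proof.
rewrite /rtr /comb (big_morph _ (@mxtraceD _ n) (mxtrace0 _ n)) Re_sum; apply: eq_bigr => j _.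
by rewrite mxtraceZ Re_crM.
Qed.

Lemma tr_comb x : \tr (comb x) = cr (rtr (comb x)).
Proof. by apply: herm_tr; apply: comb_adj. Qed.

Lemma rtr_gt0 j : P j != 0 -> 0 < rtr (P j).
Proof.
move=> nz.
case: (pickP (fun ab : 'I_n * 'I_n => P j ab.1 ab.2 != 0)) => [[a b] /= hab | h0];
  last first.
  exfalso; move/eqP: nz; apply; apply/matrixP => a b; rewrite mxE.
  by have := h0 (a, b); move/negbFE/eqP.
have -> : rtr (P j) = complex.Re (\tr (P j *m (P j) ^t*)) by rewrite Pherm Pidem.
rewrite /mxtrace Re_sum.
under eq_bigr => i _ do rewrite mxE Re_sum.
under eq_bigr => i _ do under eq_bigr => l _ do rewrite !mxE Re_mulJ.
rewrite (bigD1 a) //= (bigD1 b) //=.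
have h1 := @Re2_gt0 R _ hab.
have h2 : 0 <= \sum_(l < n | l != b) (complex.Re (P j a l) ^+ 2 + complex.Im (P j a l) ^+ 2).
  by apply: sumr_ge0 => l _; rewrite addr_ge0 ?sqr_ge0.
have h3 : 0 <= \sum_(i < n | i != a) \sum_(l < n) (complex.Re (P j i l) ^+ 2 + complex.Im (P j i l) ^+ 2).
  by apply: sumr_ge0 => i _; apply: sumr_ge0 => l _; rewrite addr_ge0 ?sqr_ge0.
lra.
Qed.

Lemma fun_comb f x : fun_mx f (comb x) = comb (fun j => f (x j)).
Proof.
set A := comb x.
have nA : A \is normalmx by apply/normalmxP; rewrite comb_adj.
move/orthomx_spectralP: nA => hA.
rewrite /fun_mx /=.
set U := spectralmx A in hA *; set dl := spectral_diag A in hA *.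
have uU : U \is unitarymx by apply: spectral_unitarymx.
move: hA; rewrite invmx_unitary // => hA.
have UU : U *m U ^t* = 1%:M by apply/unitarymxP.
have UtU : U ^t* *m U = 1%:M by rewrite -[U ^t*]mul1mx mulmxKtV.
have hD : diag_mx dl = U *m A *m U ^t*.
  by rewrite hA !mulmxA UU mul1mx -!mulmxA UU mulmx1.
pose Q j := U *m P j *m U ^t*.
have hDQ j : diag_mx dl *m Q j = cr (x j) *: Q j.
  rewrite hD /Q !mulmxA -[U *m A *m U ^t* *m U]mulmxA UtU mulmx1.
  by rewrite -[U *m A *m P j]mulmxA /A comb_mulP -scalemxAr -scalemxAl.
have hQs : \sum_j Q j = 1%:M.
  by rewrite /Q -mulmx_suml -mulmx_sumr Psum mulmx1 UU.
have key : diag_mx (map_mx (fun z => cr (f (complex.Re z))) dl) =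
           \sum_j cr (f (x j)) *: Q j.
  apply/matrixP => a b; rewrite summxE.
  rewrite (eq_bigr (fun j => cr (f (complex.Re (dl 0 a))) * Q j a b)); last first.
    move=> i _; rewrite mxE.
    have [->|nz] := eqVneq (Q i a b) 0; first by rewrite !mulr0.
    move/matrixP: (hDQ i) => /(_ a b).
    move=> eq1; rewrite mul_diag_mx mxE [RHS]mxE in eq1; rewrite (mulIf nz eq1).
    by rewrite Re_cr.
  rewrite -mulr_sumr -summxE hQs !mxE.
  by rewrite mulr_natr.
rewrite key mulmx_sumr mulmx_suml /comb; apply: eq_bigr => j _.
by rewrite -scalemxAr -scalemxAl /Q !mulmxA UtU mul1mx -mulmxA UtU mulmx1.
Qed.

End Comb.

Section RealVals.
Variable R : realType.
Implicit Types a d s : R.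

Lemma powRE a x : 0 < x -> powR x a = expR (a * ln x).
Proof. by move=> x0; rewrite /powR gt_eqF. Qed.

Lemma qrel_val d s : 0 < d -> 0 < s ->
  d^-1 * (ln d^-1 - ln s) * d = -(ln d + ln s).
Proof.
move=> d0 s0; rewrite lnV ?posrE //.
have dn : d != 0 by rewrite gt_eqF.
by field.
Qed.

Lemma petz_val a d s : 0 < d -> 0 < s -> a != 1 ->
  (a - 1)^-1 * ln (powR (d^-1) a * powR s (1 - a) * d) = -(ln d + ln s).
Proof.
move=> d0 s0 a1.
have ed : d^-1 = expR (- ln d) by rewrite expRN lnK ?posrE.
rewrite ed (powRE a _ (expR_gt0 _)) (powRE (1 - a) _ s0) expRK -expRD.
rewrite lnM ?posrE ?expR_gt0 // expRK.
have : a - 1 != 0 by rewrite subr_eq0.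
move=> h; by field.
Qed.

Lemma sand_val a d s : 0 < d -> 0 < s -> a != 0 -> a != 1 ->
  (a - 1)^-1 * ln (powR (powR s ((1 - a) / (2 * a)) * d^-1 *
                         powR s ((1 - a) / (2 * a))) a * d) = -(ln d + ln s).
Proof.
move=> d0 s0 a0 a1.
have ed : d^-1 = expR (- ln d) by rewrite expRN lnK ?posrE.
rewrite ed !(powRE _ _ s0) -!expRD (powRE a _ (expR_gt0 _)) expRK.
rewrite lnM ?posrE ?expR_gt0 // expRK.
have : a - 1 != 0 by rewrite subr_eq0.
have h2 : (2:R) != 0 by rewrite pnatr_eq0.
have h3 : 2 * a != 0 by rewrite mulf_neq0.
move=> h; field; apply/andP; split; [exact: a0 | exact: h].
Qed.

Lemma geo_val a d s : 0 < d -> 0 < s -> a != 1 ->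
  (a - 1)^-1 * ln (s * powR (powR s (- (1 / 2)) * d^-1 *
                         powR s (- (1 / 2))) a * d) = -(ln d + ln s).
Proof.
move=> d0 s0 a1.
have ed : d^-1 = expR (- ln d) by rewrite expRN lnK ?posrE.
have es : s = expR (ln s) by rewrite lnK ?posrE.
rewrite ed !(powRE _ _ s0) -!expRD (powRE a _ (expR_gt0 _)) expRK {1}es -expRD.
rewrite lnM ?posrE ?expR_gt0 // expRK.
have : a - 1 != 0 by rewrite subr_eq0.
move=> h; by field.
Qed.

End RealVals.

Theorem corollary3 (R : realType) (d m : nat)
  (H : 'M[R[i]]_d) (lam : 'I_m.+2 -> R) (Pi : 'I_m.+2 -> 'M[R[i]]_d)
  (eps : R) :
  (forall i j : 'I_m.+2, (i < j)%N -> lam i < lam j) ->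
  (forall i : 'I_m.+2, Pi i *m Pi i = Pi i) ->
  (forall i : 'I_m.+2, (Pi i) ^t* = Pi i) ->
  (forall i j : 'I_m.+2, i != j -> Pi i *m Pi j = 0) ->
  (forall i : 'I_m.+2, Pi i != 0) ->
  \sum_(i < m.+2) Pi i = 1%:M ->
  H = \sum_(i < m.+2) cr (lam i) *: Pi i ->
  0 < eps ->
  let i1 : 'I_m.+2 := ord0 in
  let i2 : 'I_m.+2 := lift ord0 ord0 in
  let Delta := lam i2 - lam i1 in
  let dG := rtr (Pi i1) in
  let beta := Delta^-1 *
      ln ((expR eps - 1)^-1 * ((d%:R - dG) / dG)) in
  0 <= beta ->
  let rho := (\tr (Pi i1))^-1 *: Pi i1 in
  let E := mx_exp (cr (- beta) *: H) in
  let sigma := (\tr E)^-1 *: E in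
  qrel_ent rho sigma <= eps /\
  (forall a : R, 0 < a -> a != 1 ->
     [/\ petz_renyi a rho sigma <= eps,
         sandwiched_renyi a rho sigma <= eps &
         geometric_renyi a rho sigma <= eps]).
Proof.
move=> Hlam Hidem Hherm Horth Hnz Hsum HH eps0 i1 i2 Delta dG beta hbeta rho E sigma.
have cmul := @comb_mul R d m.+2 Pi Hidem Horth.
have cfun := @fun_comb R d m.+2 Pi Hidem Hherm Horth Hsum.
have ctr := @tr_comb R d m.+2 Pi Hherm.
have dpos j : 0 < rtr (Pi j) := @rtr_gt0 R d m.+2 Pi Hidem Hherm j (Hnz j).
have dG0 : 0 < dG := dpos i1.
have r0 : forall x, (forall j, j != i1 -> x j = 0) ->
    rtr (comb R d m.+2 Pi x) = x i1 * dG.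
  move=> x hx; rewrite rtr_comb (bigD1 i1) //= big1 ?addr0 // => j hj.
  by rewrite hx ?mul0r.
pose xr j : R := if j == i1 then dG^-1 else 0.
have xr0 j : j != i1 -> xr j = 0 by move=> hj; rewrite /xr (negbTE hj).
have xr1 : xr i1 = dG^-1 by rewrite /xr eqxx.
have hrho : rho = comb R d m.+2 Pi xr.
  by rewrite /xr comb_delta /rho (@herm_tr R _ _ (Hherm i1)) crV.
pose ev j := expR (- beta * lam j).
have hE : E = comb R d m.+2 Pi ev.
  rewrite /E HH; change (mx_exp (cr (- beta) *: comb R d m.+2 Pi lam) = comb R d m.+2 Pi ev).
  by rewrite combZ /mx_exp cfun.
pose Z := \sum_j ev j * rtr (Pi j).
have ev0 j : 0 < ev j := expR_gt0 _.
have Z0 : 0 < Z.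
  rewrite /Z (bigD1 i1) //=.
  have h1 := mulr_gt0 (ev0 i1) (dpos i1).
  have h2 : 0 <= \sum_(j | j != i1) ev j * rtr (Pi j).
    by apply: sumr_ge0 => j _; rewrite mulr_ge0 // ltW.
  lra.
pose sv j := Z^-1 * ev j.
have hs : sigma = comb R d m.+2 Pi sv.
  by rewrite /sigma hE ctr rtr_comb -crV combZ.
have sv0 : 0 < sv i1 by rewrite /sv mulr_gt0 ?invr_gt0.
have hV : -(ln dG + ln (sv i1)) <= eps.
  have Delta0 : 0 < Delta by rewrite /Delta subr_gt0; apply: Hlam.
  have dsum : \sum_j rtr (Pi j) = d%:R.
    have := congr1 (@rtr R d) (@comb1 R d m.+2 Pi Hsum).
    rewrite rtr_comb /rtr mxtrace1 Re_nat => <-.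
    by apply: eq_bigr => j _; rewrite mul1r.
  have rest : \sum_(j | j != i1) rtr (Pi j) = d%:R - dG.
    have := dsum; rewrite (bigD1 i1) //=; change (rtr (Pi i1)) with dG; lra.
  have restpos : 0 < d%:R - dG.
    rewrite -rest (bigD1 i2) //=.
    have h1 := dpos i2.
    have h2 : 0 <= \sum_(j | (j != i1) && (j != i2)) rtr (Pi j).
      by apply: sumr_ge0 => j _; rewrite ltW.
    lra.
  pose X := (expR eps - 1)^-1 * ((d%:R - dG) / dG).
  have e1 : 0 < expR eps - 1 by rewrite subr_gt0 pexpR_gt1.
  have X0 : 0 < X by rewrite /X mulr_gt0 ?invr_gt0 ?divr_gt0.
  have bD : beta * Delta = ln X.
    have dn : Delta != 0 by rewrite gt_eqF.
    by rewrite /beta mulrC mulrA mulfV // mul1r.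
  have evle j : j != i1 -> ev j <= ev i1 * X^-1.
    move=> hj.
    have -> : X^-1 = expR (- (beta * Delta)) by rewrite bD expRN lnK ?posrE.
    rewrite /ev -expRD ler_expR.
    have hl : lam i2 <= lam j.
      case: (eqVneq j i2) => [->//|hj2].
      apply/ltW/Hlam.
      move: hj hj2; case: j => [[|[|jv]] hjv] //=.
    have hl2 : 0 <= lam j - lam i2 by rewrite subr_ge0.
    have := mulr_ge0 hbeta hl2.
    rewrite /Delta; lra.
  have Zle : Z <= ev i1 * dG * expR eps.
    rewrite /Z (bigD1 i1) //=.
    have h1 : \sum_(j | j != i1) ev j * rtr (Pi j) <=
              \sum_(j | j != i1) ev i1 * X^-1 * rtr (Pi j).
      apply: ler_sum => j hj; apply: ler_wpM2r; [exact: ltW (dpos j) | exact: evle].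
    rewrite -mulr_sumr rest -mulrA in h1.
    have h2 : X^-1 * (d%:R - dG) = (expR eps - 1) * dG.
      have n1 : expR eps - 1 != 0 by rewrite gt_eqF.
      have n2 : d%:R - dG != 0 by rewrite gt_eqF.
      have n3 : dG != 0 by rewrite gt_eqF.
      rewrite /X; field; repeat (apply/andP; split); first [exact: n1 | exact: n2 | exact: n3].
    rewrite h2 in h1.
    change (rtr (Pi i1)) with dG.
    nra.
  have key : expR (- eps) <= dG * sv i1.
    have eq1 : expR (- eps) = dG * ((ev i1 * dG * expR eps)^-1 * ev i1).
      have n1 : ev i1 != 0 by rewrite gt_eqF.
      have n2 : dG != 0 by rewrite gt_eqF.
      have n3 : expR eps != 0 by rewrite gt_eqF ?expR_gt0.
      rewrite expRN; field; repeat (apply/andP; split); first [exact: n1 | exact: n2 | exact: n3].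
    rewrite eq1 /sv; apply: ler_wpM2l; first exact: ltW.
    apply: ler_wpM2r; first exact: ltW.
    by rewrite lef_pV2 ?posrE ?mulr_gt0 ?expR_gt0.
  have := key; rewrite -ler_ln ?posrE ?expR_gt0 ?mulr_gt0 ?invr_gt0 // lnM ?posrE //.
  have -> : ln (expR (- eps)) = - eps by apply: expRK.
  lra.
split.
  rewrite /qrel_ent hrho hs /mx_ln !cfun combB cmul r0.
    by rewrite /= xr1 qrel_val.
  by move=> j hj; rewrite /= xr0 // mul0r.
move=> a a0 a1.
have an : a != 0 by rewrite gt_eqF.
split.
- rewrite /petz_renyi hrho hs /mx_pow !cfun cmul r0.
    by rewrite /= xr1 petz_val.
  by move=> j hj; rewrite /= xr0 // powR0 // mul0r.
- rewrite /sandwiched_renyi /= hrho hs /mx_pow !cfun !cmul cfun r0.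
    by rewrite /= xr1 sand_val.
  by move=> j hj; rewrite /= xr0 // mulr0 mul0r powR0.
- rewrite /geometric_renyi /= hrho hs /mx_pow !cfun !cmul cfun cmul r0.
    by rewrite /= xr1 geo_val.
  by move=> j hj; rewrite /= xr0 // mulr0 mul0r powR0 // mulr0.
Qed.
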